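(* Let $S$ be an inductive left $E$-monoid. Then $E$ is a maximal right pre-reduced subset of $E(S)$ if and only if $Rest(E,S)$ has precisely enough large idempotents. If moreover $S$ is integral with zero and $0\in E$, then $E$ is maximal right pre-reduced if and only if $Rest_0(E,S)$ has precisely enough large idempotents.
   Context: For a semigroup $S$, $E(S)$ is its set of idempotents; for $e,f\in E(S)$, $e\le_r f$ iff $e=ef$, and $e\sim_r f$ iff $e\le_r f$ and $f\le_r e$. $E\subseteq E(S)$ is right pre-reduced if $e=ef$ and $f=fe$ imply $e=f$ for $e,f\in E$; it is maximal right pre-reduced if it contains exactly one element of each $\sim_r$-class of $E(S)$. A monoid with zero is integral if $st=0$ implies $s=0$ or $t=0$. Let $S$ be a monoid and $1\in E\subseteq E(S)$. $S$ is an inductive left $E$-monoid if $E$ is right pre-reduced, $(E,\le_r)$ is a meet-semilattice with meet $\wedge$, and (I1') for all $t\in S$, $e\in E$ there is $t\cdot e\in E$ such that for all $s\in S$: $ste=st$ iff $s(t\cdot e)=s$; (I2') for $s\in S$, $e,f\in E$: $se=sf=s$ implies $s(e\wedge f)=s$. $Rest(E,S)$ is $C_E(S)=\{(e,s)\in E\times S\mid es=s\}$ with $(e,s)(f,t)=(e\wedge(s\cdot f),(e\wedge(s\cdot f))st)$ and $D((e,s))=(e,e)$; if $S$ is integral with zero and $0\in E$, $Rest_0(E,S)$ is the subset $C^0_E(S)=\{(e,s)\in C_E(S)\mid s=0\Rightarrow e=0\}$ with the same operations. A left restriction semigroup is a semigroup with unary $D$ satisfying $D(x)x=x$, $D(x)D(y)=D(y)D(x)$,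 $D(D(x)y)=D(x)D(y)$, $xD(y)=D(xy)x$. For a left restriction monoid $M$, $M_1=\{s\in M\mid D(s)=1\}$; a zero of $M$ is a semigroup zero $0$ with $D(0)=0$. $M$ has enough large idempotents if for every $e\in D(M)$ other than a zero of $M$ there is $f\in E(M_1)$ with $e\sim_r f$; it has precisely enough large idempotents if in addition for every $f\in E(M_1)$ there is $e\in D(M)$ with $e\sim_r f$. *)

(* Defs.v *)
Set Implicit Arguments.

Section Defs.
Variable S : Type.
Variable mul : S -> S -> S.
Variable one : S.

Definition is_monoid : Prop :=
  (forall a b c, mul a (mul b c) = mul (mul a b) c) /\
  (forall a, mul one a = a) /\ (forall a, mul a one = a).

Definition idem (x : S) : Prop := mul x x = x.

Definition le_r (e f : S) : Prop := e = mul e f.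
Definition sim_r (e f : S) : Prop := le_r e f /\ le_r f e.

Definition right_pre_reduced (E : S -> Prop) : Prop :=
  forall e f, E e -> E f -> e = mul e f -> f = mul f e -> e = f.

Definition max_right_pre_reduced (E : S -> Prop) : Prop :=
  (forall e, E e -> idem e) /\
  (forall x, idem x -> exists e, E e /\ sim_r e x /\
     forall e', E e' -> sim_r e' x -> e' = e).

(* S is an inductive left E-monoid, with meet [meet] on (E, <=_r)
   and the operation t.e given by [dot]. *)
Record inductive_left_E_monoid (E : S -> Prop) (meet : S -> S -> S)
    (dot : S -> S -> S) : Prop := {
  ilm_sub : forall e, E e -> idem e;
  ilm_one : E one;
  ilm_prr : right_pre_reduced E;
  ilm_meet_E : forall e f, E e -> E f -> E (meet e f);
  ilm_meet_l : forall e f, E e -> E f -> le_r (meet e f) e;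
  ilm_meet_r : forall e f, E e -> E f -> le_r (meet e f) f;
  ilm_meet_glb : forall e f g, E e -> E f -> E g ->
      le_r g e -> le_r g f -> le_r g (meet e f);
  ilm_I1_E : forall t e, E e -> E (dot t e);
  ilm_I1 : forall t e, E e -> forall s,
      mul (mul s t) e = mul s t <-> mul s (dot t e) = s;
  ilm_I2 : forall s e f, E e -> E f -> mul s e = s -> mul s f = s ->
      mul s (meet e f) = s
}.

Definition is_zero (z : S) : Prop := forall s, mul z s = z /\ mul s z = z.
Definition integral (z : S) : Prop :=
  forall s t, mul s t = z -> s = z \/ t = z.

Definition C_E (E : S -> Prop) (p : S * S) : Prop :=
  E (fst p) /\ mul (fst p) (snd p) = snd p.
Definition C0_E (E : S -> Prop) (z : S) (p : S * S) : Prop :=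
  C_E E p /\ (snd p = z -> fst p = z).
Definition rest_mul (meet dot : S -> S -> S) (p q : S * S) : S * S :=
  let g := meet (fst p) (dot (snd p) (fst q)) in
  (g, mul g (mul (snd p) (snd q))).
Definition rest_D (p : S * S) : S * S := (fst p, fst p).
Definition rest_one : S * S := (one, one).
End Defs.

(* Generic notions for a left restriction monoid presented as a carrier
   predicate P on a type T, multiplication m, unary D and identity u. *)
Section LRM.
Variable T : Type.
Variables (P : T -> Prop) (m : T -> T -> T) (D : T -> T) (u : T).

Definition M_idem (x : T) : Prop := P x /\ m x x = x.
Definition M_sim_r (e f : T) : Prop := e = m e f /\ f = m f e.
Definition in_DM (e : T) : Prop := exists x, P x /\ e = D x.
Definition in_EM1 (f : T) : Prop := M_idem f /\ D f = u.
Definition M_zero (z : T) : Prop :=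
  P z /\ (forall x, P x -> m z x = z /\ m x z = z) /\ D z = z.

Definition enough_large_idempotents : Prop :=
  forall e, in_DM e -> ~ M_zero e -> exists f, in_EM1 f /\ M_sim_r e f.
Definition precisely_enough_large_idempotents : Prop :=
  enough_large_idempotents /\
  (forall f, in_EM1 f -> exists e, in_DM e /\ M_sim_r e f).
End LRM.

(* Main.v *)
Require Import Defs.
From Stdlib Require Import Classical.
Set Implicit Arguments.

Lemma L_dot1 (S : Type) (mul : S -> S -> S) (one : S) (E : S -> Prop) (meet dot : S -> S -> S) :
  is_monoid mul one -> inductive_left_E_monoid mul one E meet dot ->
  forall t, dot t one = one.
Proof.
  intros [Ha [Hl Hr]] H t.
  pose proof (proj1 (ilm_I1 H t one (ilm_one H) one)) as K.
  rewrite Hl in K. rewrite <- (Hl (dot t one)). apply K. apply Hr.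
Qed.

Lemma L_meet1 (S : Type) (mul : S -> S -> S) (one : S) (E : S -> Prop) (meet dot : S -> S -> S) :
  is_monoid mul one -> inductive_left_E_monoid mul one E meet dot ->
  forall e, E e -> meet e one = e /\ meet one e = e.
Proof.
  intros [Ha [Hl Hr]] H e He. pose proof (ilm_one H) as H1.
  assert (Hi : mul e e = e) by exact (ilm_sub H e He).
  split.
  - apply (ilm_prr H); auto; try apply (ilm_meet_E H); auto.
    + apply (ilm_meet_l H); auto.
    + apply (ilm_meet_glb H); auto; unfold le_r; auto.
  - apply (ilm_prr H); auto; try apply (ilm_meet_E H); auto.
    + apply (ilm_meet_r H); auto.
    + apply (ilm_meet_glb H); auto; unfold le_r; auto.
Qed.

Lemma L_idem1 (S : Type) (mul : S -> S -> S) (one : S) (E : S -> Prop) (meet dot : S -> S -> S) :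
  is_monoid mul one -> inductive_left_E_monoid mul one E meet dot ->
  forall s, rest_mul mul meet dot (one, s) (one, s) = (one, s) <-> mul s s = s.
Proof.
  intros Hm H s. pose proof Hm as [Ha [Hl Hr]].
  unfold rest_mul; simpl. rewrite (L_dot1 Hm H), (proj1 (L_meet1 Hm H _ (ilm_one H))), Hl.
  split; intro K. injection K; auto. rewrite K; reflexivity.
Qed.

Lemma L_sim (S : Type) (mul : S -> S -> S) (one : S) (E : S -> Prop) (meet dot : S -> S -> S) :
  is_monoid mul one -> inductive_left_E_monoid mul one E meet dot ->
  forall e s, E e ->
  (M_sim_r (rest_mul mul meet dot) (e, e) (one, s) <-> sim_r mul e s).
Proof.
  intros Hm H e s He. pose proof Hm as [Ha [Hl Hr]].
  assert (Hi : mul e e = e) by exact (ilm_sub H e He).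
  assert (Hd : E (dot s e)) by exact (ilm_I1_E H s e He).
  unfold M_sim_r, rest_mul, sim_r, le_r; simpl.
  rewrite (L_dot1 Hm H), (proj1 (L_meet1 Hm H _ He)), (proj2 (L_meet1 Hm H _ Hd)).
  rewrite Ha, Hi.
  pose proof (ilm_I1 H s e He one) as K. rewrite !Hl in K.
  split.
  - intros [A B]. injection A; injection B; intros B2 B1 A1.
    split; auto. symmetry; apply K. auto.
  - intros [A B]. assert (D1 : dot s e = one) by (apply K; auto).
    rewrite D1, Hl, <- A, <- B. auto.
Qed.

Lemma L_trans (S : Type) (mul : S -> S -> S) (one : S) : is_monoid mul one ->
  forall e x e', sim_r mul e x -> sim_r mul e' x -> sim_r mul e e'.
Proof.
  intros [Ha [Hl Hr]] e x e' [A B] [C D]. unfold le_r in *. split.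
  - transitivity (mul e (mul x e')). rewrite <- D; exact A. rewrite Ha, <- A; reflexivity.
  - transitivity (mul e' (mul x e)). rewrite <- B; exact C. rewrite Ha, <- C; reflexivity.
Qed.

Lemma L_uniq (S : Type) (mul : S -> S -> S) (one : S) (E : S -> Prop) (meet dot : S -> S -> S) :
  is_monoid mul one -> inductive_left_E_monoid mul one E meet dot ->
  forall x e, E e -> sim_r mul e x -> forall e', E e' -> sim_r mul e' x -> e' = e.
Proof.
  intros Hm H x e He Hs e' He' Hs'.
  destruct (L_trans Hm Hs' Hs) as [A B]. apply (ilm_prr H); auto.
Qed.

Lemma L_zero (S : Type) (mul : S -> S -> S) (one : S) (E : S -> Prop) (meet dot : S -> S -> S) (z : S) :
  is_monoid mul one -> inductive_left_E_monoid mul one E meet dot ->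
  is_zero mul z -> integral mul z -> E z ->
  M_zero (C0_E mul E z) (rest_mul mul meet dot) (@rest_D S) (z, z).
Proof.
  intros Hm H Hz Hint HEz. pose proof Hm as [Ha [Hl Hr]].
  assert (Mz : forall e f, E e -> E f -> le_r mul (meet e f) z -> meet e f = z).
  { intros e f Ee Ef L. unfold le_r in L. rewrite L. apply (Hz _). }
  unfold M_zero, C0_E, C_E, rest_mul, rest_D; simpl. split; [split; [split; auto; apply Hz|auto]|].
  split; [|reflexivity].
  intros [e s] [[Ee Es] Hc]; simpl in *. split.
  - assert (Ed : E (dot z e)) by exact (ilm_I1_E H z e Ee).
    assert (meet z (dot z e) = z) as ->.
    { apply Mz; auto. apply (ilm_meet_l H); auto. }
    rewrite (proj1 (Hz _)). reflexivity.
  - assert (Ed : E (dot s z)) by exact (ilm_I1_E H s z HEz).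
    assert (Ei : mul (dot s z) (dot s z) = dot s z) by exact (ilm_sub H _ Ed).
    assert (meet e (dot s z) = z) as ->.
    { apply Mz; auto.
      pose proof (proj2 (ilm_I1 H s z HEz (dot s z)) Ei) as K.
      rewrite (proj2 (Hz _)) in K.
      destruct (Hint _ _ (eq_sym K)) as [D|D].
      - rewrite D in *. apply (ilm_meet_r H); auto.
      - rewrite Hc in Ee by exact D. rewrite (Hc D).
        apply (ilm_meet_l H); auto. }
    rewrite (proj1 (Hz _)). reflexivity.
Qed.

Theorem proposition4p4 (S : Type) (mul : S -> S -> S) (one : S)
    (E : S -> Prop) (meet dot : S -> S -> S) :
  is_monoid mul one ->
  inductive_left_E_monoid mul one E meet dot ->
  (max_right_pre_reduced mul E <->
     precisely_enough_large_idempotents (C_E mul E) (rest_mul mul meet dot)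
       (@rest_D S) (rest_one one)) /\
  (forall z : S, is_zero mul z -> integral mul z -> E z ->
     (max_right_pre_reduced mul E <->
        precisely_enough_large_idempotents (C0_E mul E z)
          (rest_mul mul meet dot) (@rest_D S) (rest_one one))).
Proof.
  intros Hm H. pose proof Hm as [Ha [Hl Hr]].
  pose proof (ilm_one H) as H1.
  split.
  - split.
    + intros [Hsub Hmax]. split.
      * intros e [y [[Ey _] ->]] _. destruct y as [g t]; simpl in *.
        exists (one, g). unfold in_EM1, M_idem, C_E, rest_D, rest_one; simpl.
        assert (Hi : mul g g = g) by exact (ilm_sub H g Ey).
        split; [split; [split; [split; auto|] |reflexivity]|].
        -- apply (L_idem1 Hm H); auto.
        -- apply (L_sim Hm H); auto. split; unfold le_r; auto.
      * intros [e s] [[[Ee Es] Hid] HD]. unfold rest_D, rest_one in HD; simpl in *.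
        injection HD; intros _ ->. apply (L_idem1 Hm H) in Hid.
        destruct (Hmax s Hid) as [g [Eg [Hs _]]].
        exists (g, g). split.
        -- exists (g, g). unfold C_E; simpl. split; auto. split; auto. apply (ilm_sub H); auto.
        -- apply (L_sim Hm H); auto.
    + intros [_ HP]. split; [exact (ilm_sub H)|].
      intros x Hx.
      destruct (HP (one, x)) as [ee [[y [[Ey _] ->]] Hs]].
      { unfold in_EM1, M_idem, C_E, rest_D, rest_one; simpl.
        split; [split; [split; auto|] |reflexivity]. apply (L_idem1 Hm H); auto. }
      destruct y as [g t]; simpl in *. apply (L_sim Hm H) in Hs; auto.
      exists g. split; auto. split; auto. intros e' Ee' Hs'. apply (L_uniq Hm H Ey Hs); auto.
  - intros z Hz Hint HEz. pose proof (L_zero Hm H Hz Hint HEz) as HZ.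
    split.
    + intros [Hsub Hmax]. split.
      * intros e [y [[[Ey _] _] ->]] Hnz. destruct y as [g t]; simpl in *.
        unfold rest_D in *; simpl in *.
        assert (gz : g <> z) by (intro E0; subst; contradiction).
        exists (one, g). unfold in_EM1, M_idem, C0_E, C_E, rest_D, rest_one; simpl.
        assert (Hi : mul g g = g) by exact (ilm_sub H g Ey).
        split; [split; [split; [split; [split; auto|intro; contradiction]|] |reflexivity]|].
        -- apply (L_idem1 Hm H); auto.
        -- apply (L_sim Hm H); auto. split; unfold le_r; auto.
      * intros [e s] [[[[Ee Es] _] Hid] HD]. unfold rest_D, rest_one in HD; simpl in *.
        injection HD; intros _ ->. apply (L_idem1 Hm H) in Hid.
        destruct (Hmax s Hid) as [g [Eg [Hs _]]].
        exists (g, g). split.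
        -- exists (g, g). unfold C0_E, C_E; simpl. split; auto.
           split; [split; auto|auto]. apply (ilm_sub H); auto.
        -- apply (L_sim Hm H); auto.
    + intros [_ HP]. split; [exact (ilm_sub H)|].
      intros x Hx.
      destruct (classic (x = z)) as [Xz|Xz].
      { subst x. exists z. split; auto. split; [split; unfold le_r; symmetry; auto|].
        intros e' Ee' Hs'. apply (L_uniq Hm H HEz (conj (eq_sym Hx) (eq_sym Hx))); auto. }
      destruct (HP (one, x)) as [ee [[y [[[Ey _] _] ->]] Hs]].
      { unfold in_EM1, M_idem, C0_E, C_E, rest_D, rest_one; simpl.
        split; [split; [split; [split; auto|intro; contradiction]|] |reflexivity].
        apply (L_idem1 Hm H); auto. }
      destruct y as [g t]; simpl in *. apply (L_sim Hm H) in Hs; auto.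
      exists g. split; auto. split; auto. intros e' Ee' Hs'. apply (L_uniq Hm H Ey Hs); auto.
Qed.
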